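(* Let $X$, $Z$ be topological vector spaces, $C\subseteq Z$ a nonempty closed convex cone with $C^-\neq\{0\}$, $f:X\to\mathcal{F}(Z,C)$ convex and $x_0\in{\rm dom\,} f$. If $f$ is lattice-bounded above on a neighborhood of $x_0$, or efficient at $x_0$, or upper lattice-semicontinuous at $x_0$, or lower continuous at $x_0$, then $f$ has the corresponding property (lattice-bounded above on a neighborhood of $x$, efficient at $x$, upper lattice-semicontinuous at $x$, lower continuous at $x$, respectively) at every $x\in\operatorname{Int}({\rm dom\,} f)$.
   Context: $\mathcal{F}(Z,C)=\{A\subseteq Z\colon A=\operatorname{cl}(A+C)\}$ (empty set included); $C^-=\{z^*\in Z^*\colon z^*(z)\le0\ \forall z\in C\}$; ${\rm dom\,} f=\{x\colon f(x)\neq\emptyset\}$. $f$ is convex iff $tf(x_1)+(1-t)f(x_2)\subseteq f(tx_1+(1-t)x_2)$ for all $x_1,x_2$, $t\in(0,1)$. Lattice-bounded above on $M$: there is $a\in Z$ with $a\in f(x)$ for all $x\in M$. Efficient at $x_0$: there exist a neighborhood $U$ of $x_0$ and a bounded set $B\subseteq Z$ (absorbed by every neighborhood of $0$) with $f(x)\cap B\neq\emptyset$ for all $x\in U$. Upper lattice-semicontinuous at $x_0$: $f(x_0)\subseteq\operatorname{cl}\bigcup_{U\in\mathcal{N}(x_0)}\bigcap_{x\in U}f(x)$, $\mathcal{N}(x_0)$ the neighborhoods of $x_0$. Lower continuous at $x_0$: for every $z_0\in f(x_0)$ and every neighborhood $V$ of $z_0$ there is a neighborhood $U$ of $x_0$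 with $f(x)\cap V\neq\emptyset$ for all $x\in U$. *)

(* Defs.v *)
From HB Require Import structures.
From mathcomp Require Import all_boot all_order all_algebra.
From mathcomp Require Import all_classical all_reals all_analysis.
Set Implicit Arguments.
Unset Strict Implicit.
Unset Printing Implicit Defensive.
Import Order.TTheory GRing.Theory Num.Theory.
Import numFieldTopology.Exports.
Local Open Scope classical_set_scope.
Local Open Scope ring_scope.

Section SetValued.
Variable R : realType.

Definition set_add (V : lmodType R) (A B : set V) : set V :=
  [set a + b | a in A & b in B].
Definition set_scale (V : lmodType R) (t : R) (A : set V) : set V :=
  [set t *: a | a in A].

Variable Z : topologicalLmodType R.

Definition closed_convex_cone (C : set Z) : Prop :=
  C !=set0 /\ closed C /\
  (forall (s t : R) (x y : Z), C x -> C y -> 0 <= s -> 0 <= t ->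
     C (s *: x + t *: y)).

Definition dual_elt (zs : Z -> R) : Prop :=
  (forall (a : R) (x y : Z), zs (a *: x + y) = a * zs x + zs y) /\
  continuous zs.

Definition neg_dual_cone (C : set Z) : set (Z -> R) :=
  [set zs | dual_elt zs /\ forall z, C z -> zs z <= 0].

Definition in_FZC (C : set Z) (A : set Z) : Prop :=
  A = closure (set_add A C).

Definition tvs_bounded (B : set Z) : Prop :=
  forall V : set Z, nbhs (0 : Z) V ->
    exists s : R, 0 < s /\ forall t : R, s < t -> B `<=` set_scale t V.

Variable X : topologicalLmodType R.

Definition sv_dom (f : X -> set Z) : set X := [set x | f x !=set0].

Definition sv_convex (f : X -> set Z) : Prop :=
  forall (x1 x2 : X) (t : R), 0 < t < 1 ->
    set_add (set_scale t (f x1)) (set_scale (1 - t) (f x2))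
      `<=` f (t *: x1 + (1 - t) *: x2).

Definition lattice_bounded_above_on (f : X -> set Z) (M : set X) : Prop :=
  exists a : Z, forall x, M x -> f x a.

Definition lattice_bounded_above_near (f : X -> set Z) (x0 : X) : Prop :=
  exists U : set X, nbhs x0 U /\ lattice_bounded_above_on f U.

Definition efficient_at (f : X -> set Z) (x0 : X) : Prop :=
  exists U : set X, nbhs x0 U /\
  exists B : set Z, tvs_bounded B /\ forall x, U x -> f x `&` B !=set0.

Definition upper_lattice_sc_at (f : X -> set Z) (x0 : X) : Prop :=
  f x0 `<=` closure (\bigcup_(U in [set U | nbhs x0 U])
                       \bigcap_(x in U) f x).

Definition lower_continuous_at (f : X -> set Z) (x0 : X) : Prop :=
  forall z0, f x0 z0 -> forall V : set Z, nbhs z0 V ->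
    exists U : set X, nbhs x0 U /\ forall x, U x -> f x `&` V !=set0.

End SetValued.

(* Main.v *)
Require Import Defs.
From HB Require Import structures.
From mathcomp Require Import all_boot all_order all_algebra.
From mathcomp Require Import all_classical all_reals all_analysis.
From mathcomp Require Import lra ring.
Import Order.TTheory GRing.Theory Num.Theory.
Import numFieldTopology.Exports.
Local Open Scope classical_set_scope.
Local Open Scope ring_scope.

Section H.
Variables (R : realType) (Z : topologicalLmodType R).
Implicit Types (k : R).

Lemma tcvgD (T : Type) (F : set_system T) (FF : Filter F) (g h : T -> Z) a b :
  g @ F --> a -> h @ F --> b -> (fun y => g y + h y) @ F --> a + b.
Proof. move=> ga hb; exact: (@continuous2_cvg _ _ _ _ F FF g h (fun u v => u + v) a b (@add_continuous _ (a, b)) ga hb). Qed.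

Lemma tcvgZ (T : Type) (F : set_system T) (FF : Filter F) (s : T -> R) (g : T -> Z) (k : R) (a : Z) :
  s @ F --> k -> g @ F --> a -> (fun y => s y *: g y) @ F --> k *: a.
Proof. move=> sk ga; exact: (@continuous2_cvg _ R^o _ _ F FF s g (fun (r : R^o) (v : Z) => r *: v) k a (@scale_continuous _ _ ((k : R^o), a)) sk ga). Qed.

Lemma near0_pos (A : set R) : nbhs (0:R) A -> exists l, 0 < l < 1 /\ A l.
Proof.
move=> /nbhs_ballP [e /= e0 He]; exists (Num.min (e/2) (1/2)); split.
  rewrite lt_min gt_min; apply/andP; split; first by apply/andP; split; lra.
  by apply/orP; right; lra.
apply: He; rewrite /ball /= sub0r normrN ger0_norm; last by rewrite le_min; apply/andP; split; lra.
by rewrite gt_min; apply/orP; left; lra.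
Qed.


Lemma affine_nbhs k (c x0 : Z) (U : set Z) : k != 0 -> nbhs x0 U ->
  nbhs (k *: x0 + c) [set w | exists2 u, U u & w = k *: u + c].
Proof.
move=> k0 Ux0.
have h : (fun w => k^-1 *: (w - c)) @ (k *: x0 + c) --> k^-1 *: ((k *: x0 + c) + - c).
  apply: tcvgZ; first exact: cvg_cst.
  apply: tcvgD; [exact: cvg_id | exact: cvg_cst].
rewrite addrK scalerA mulVf // scale1r in h.
have := h U Ux0; rewrite nbhs_simpl /=.
apply: filterS => w /= Uw; exists (k^-1 *: (w - c)) => //.
by rewrite scalerA mulfV // scale1r subrK.
Qed.

Lemma joint_cvg (t : R) (b z z0 : Z) :
  (fun q : R * Z => q.1 *: (t *: q.2 + (1 - t) *: b) + (1 - q.1) *: z)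
     @ ((0:R), z0) --> z.
Proof.
have h : (fun q : R * Z => q.1 *: (t *: q.2 + (1 - t) *: b) + (1 - q.1) *: z)
     @ ((0:R), z0) --> 0 *: (t *: z0 + (1 - t) *: b) + (1 - 0) *: z.
  apply: tcvgD; apply: tcvgZ.
  - exact: cvg_fst.
  - apply: tcvgD; last exact: cvg_cst.
    apply: tcvgZ; [exact: cvg_cst | exact: cvg_snd].
  - apply: cvgB; [exact: cvg_cst | exact: cvg_fst].
  - exact: cvg_cst.
by rewrite scale0r add0r subr0 scale1r in h.
Qed.

Lemma tvs_bounded_affine k (c : Z) (B : set Z) : 0 < k -> tvs_bounded B ->
  tvs_bounded [set k *: a + c | a in B].
Proof.
move=> k0 hB V V0.
have := @add_continuous Z ((0 : Z), (0 : Z)) V; rewrite /= addr0 => /(_ V0).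
move=> [[W1 W2] /= [W10 W20] W12].
have [s1 [s10 Hs1]] := hB W1 W10.
have hc : (fun m : R => m *: c) @ (0 : R) --> 0 *: c.
  apply: tcvgZ; [exact: cvg_id | exact: cvg_cst].
rewrite scale0r in hc.
have /nbhs_ballP [e /= e0 He] := hc W2 W20.
exists (k * s1 + e^-1); split; first by rewrite addr_gt0 ?mulr_gt0 ?invr_gt0.
move=> r hr _ [a Ba <-].
have r0 : 0 < r by apply: lt_trans hr; rewrite addr_gt0 ?mulr_gt0 ?invr_gt0.
have hr1 : s1 < r / k.
  rewrite ltr_pdivlMr // mulrC; apply: le_lt_trans hr; rewrite lerDl invr_ge0; exact: ltW.
have [w1 W1w1 ew1] := Hs1 _ hr1 a Ba.
have hW2 : W2 (r^-1 *: c).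
  apply: He; rewrite /ball /= sub0r normrN ger0_norm ?invr_ge0 ?ltW //.
  rewrite -(invrK e) ltf_pV2 ?posrE ?invr_gt0 //.
  by apply: le_lt_trans hr; rewrite lerDr mulr_ge0 ?ltW.
exists (w1 + r^-1 *: c); first exact: (W12 (w1, r^-1 *: c)).
rewrite -ew1 scalerDr scalerA mulfV ?gt_eqF // scale1r scalerA.
by rewrite [k * _]mulrC -mulrA mulVf ?gt_eqF // mulr1.
Qed.

End H.

Section M.
Variables (R : realType) (X Z : topologicalLmodType R) (f : X -> set Z).
Hypothesis fconv : sv_convex f.

Lemma conv_step (u1 u2 : X) (a1 a2 : Z) (t : R) : 0 < t < 1 -> f u1 a1 -> f u2 a2 ->
  f (t *: u1 + (1 - t) *: u2) (t *: a1 + (1 - t) *: a2).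
Proof.
move=> t01 h1 h2; apply: fconv => //.
exists (t *: a1); first by exists a1.
by exists ((1 - t) *: a2); first by exists a2.
Qed.

Lemma decomp (x0 x : X) : nbhs x (sv_dom f) ->
  exists x1 t, [/\ 0 < t < 1, sv_dom f x1 & x = t *: x0 + (1 - t) *: x1].
Proof.
move=> hx.
have h : (fun s : R => x + s *: (x - x0)) @ (0 : R) --> x + 0 *: (x - x0).
  apply: tcvgD; first exact: cvg_cst.
  apply: tcvgZ; [exact: cvg_id | exact: cvg_cst].
rewrite scale0r addr0 in h.
have [s [/andP [s0 s1] hs]] := @near0_pos R _ (h _ hx).
have s10 : 1 + s != 0 by rewrite gt_eqF // addr_gt0.
exists (x + s *: (x - x0)), (s / (1 + s)); split => //.
  apply/andP; split; first by rewrite divr_gt0 // addr_gt0.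
  by rewrite ltr_pdivrMr ?addr_gt0 // mul1r ltrDr.
have e1 : (1 - s / (1 + s)) * s = s / (1 + s) by field.
have e2 : (1 - s / (1 + s)) + s / (1 + s) = 1 by field.
set t := s / (1 + s) in e1 e2 *.

apply/esym; rewrite scalerDr !scalerBr !scalerA e1.

rewrite addrCA (addrC (t *: x)) addNKr -scalerDl e2 scale1r //.
Qed.

Lemma key (x0 x x1 : X) (t l : R) (b z : Z) (U : set X) :
  0 < t < 1 -> 0 < l < 1 -> f x1 b -> f x z -> x = t *: x0 + (1 - t) *: x1 ->
  nbhs x0 U ->
  exists U', nbhs x U' /\ forall w, U' w -> exists u, U u /\
     forall a, f u a -> f w (l *: (t *: a + (1 - t) *: b) + (1 - l) *: z).
Proof.
move=> /andP [t0 t1] /andP [l0 l1] fb fz ex Ux0.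
set c := l *: ((1 - t) *: x1) + (1 - l) *: x.
have lt0 : l * t != 0 by rewrite gt_eqF // mulr_gt0.
have := @affine_nbhs R X _ c _ _ lt0 Ux0.
have -> : (l * t) *: x0 + c = x.
  rewrite /c -scalerA addrA -scalerDr -ex -scalerDl addrC subrK scale1r //.
move=> hU'; eexists; split; first exact: hU'.
move=> w [u Uu ->]; exists u; split => // a fa.
have -> : (l * t) *: u + c = l *: (t *: u + (1 - t) *: x1) + (1 - l) *: x.
  by rewrite /c scalerDr scalerA addrA.
apply: conv_step; first by apply/andP.
  apply: conv_step => //; by apply/andP.
done.
Qed.

End M.

Theorem mainTheorem12 (R : realType) (X Z : topologicalLmodType R)
  (C : set Z) (f : X -> set Z) (x0 : X) :
  closed_convex_cone C ->
  (exists zs, neg_dual_cone C zs /\ zs <> (fun _ => 0)) ->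
  (forall x, in_FZC C (f x)) ->
  sv_convex f ->
  sv_dom f x0 ->
  [/\ (lattice_bounded_above_near f x0 ->
         forall x, (sv_dom f)° x -> lattice_bounded_above_near f x),
      (efficient_at f x0 ->
         forall x, (sv_dom f)° x -> efficient_at f x),
      (upper_lattice_sc_at f x0 ->
         forall x, (sv_dom f)° x -> upper_lattice_sc_at f x) &
      (lower_continuous_at f x0 ->
         forall x, (sv_dom f)° x -> lower_continuous_at f x)].
Proof.
move=> _ _ _ fconv [z0 fz0].
have prep : forall x, (sv_dom f)° x -> exists x1 t b z,
    [/\ 0 < t < 1, f x1 b, f x z & x = t *: x0 + (1 - t) *: x1].
  move=> x hx.
  have [x1 [t [t01 [b fb] ex]]] := @decomp R X Z f x0 x hx.
  have [z fz] : sv_dom f x := nbhs_singleton hx.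
  by exists x1, t, b, z.
have [l [l01 _]] := @near0_pos R setT filterT.
split.
- move=> [U [Ux0 [a Ha]]] x /prep [x1 [t [b [z [t01 fb fz ex]]]]].
  have [U' [hU' HU']] := @key R X Z f fconv _ _ _ _ _ _ _ _ t01 l01 fb fz ex Ux0.
  exists U'; split => //.
  exists (l *: (t *: a + (1 - t) *: b) + (1 - l) *: z) => w /HU' [u [Uu Hu]].
  exact: Hu _ (Ha u Uu).
- move=> [U [Ux0 [B [bB HB]]]] x /prep [x1 [t [b [z [t01 fb fz ex]]]]].
  have [U' [hU' HU']] := @key R X Z f fconv _ _ _ _ _ _ _ _ t01 l01 fb fz ex Ux0.
  exists U'; split => //.
  have lt0 : 0 < l * t by case/andP: l01 => l0 _; case/andP: t01 => t0 _; rewrite mulr_gt0.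
  exists [set (l * t) *: a + (l *: ((1 - t) *: b) + (1 - l) *: z) | a in B]; split.
    exact: tvs_bounded_affine.
  move=> w /HU' [u [Uu Hu]].
  have [a [fa Ba]] := HB u Uu.
  exists (l *: (t *: a + (1 - t) *: b) + (1 - l) *: z); split; first exact: Hu.
  by exists a => //; rewrite scalerDr scalerA addrA.
- move=> hx0 x /prep [x1 [t [b [z [t01 fb fz ex]]]]] zz fzz V Vz.
  have := @joint_cvg R Z t b zz z0 _ Vz.
  move=> [[A W] /= [A0 W0] AW].
  have [l' [l01' Al]] := @near0_pos R A A0.
  have [a [[U Ux0 HU] Wa]] := hx0 z0 fz0 W W0.
  have [U' [hU' HU']] := @key R X Z f fconv _ _ _ _ _ _ _ _ t01 l01' fb fzz ex Ux0.
  exists (l' *: (t *: a + (1 - t) *: b) + (1 - l') *: zz); split.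
    exists U' => // w /HU' [u [Uu Hu]]; exact: Hu _ (HU u Uu).
  exact: (AW (l', a)).
- move=> hx0 x /prep [x1 [t [b [z [t01 fb fz ex]]]]] zz fzz V Vz.
  have := @joint_cvg R Z t b zz z0 _ Vz.
  move=> [[A W] /= [A0 W0] AW].
  have [l' [l01' Al]] := @near0_pos R A A0.
  have [U [Ux0 HU]] := hx0 z0 fz0 W W0.
  have [U' [hU' HU']] := @key R X Z f fconv _ _ _ _ _ _ _ _ t01 l01' fb fzz ex Ux0.
  exists U'; split => // w /HU' [u [Uu Hu]].
  have [a [fa Wa]] := HU u Uu.
  exists (l' *: (t *: a + (1 - t) *: b) + (1 - l') *: zz); split; first exact: Hu.
  exact: (AW (l', a)).
Qed.
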